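(* Let $G$ be a $2K_2$-free graph, let $a,b$ be adjacent vertices of $G$, and let $X$ be a minimal dominating set of $G$ with $a,b\in X$ and $|X|>\alpha(G)$. Let $N$ be the set of vertices not in $\{a,b\}$ adjacent to at least one of $a,b$ and let $Y=X\cap N$. If $|Y|>1$, then every vertex of $Y$ is adjacent to both $a$ and $b$.
   Context: All graphs are finite, simple and undirected. $2K_2$-free means no induced subgraph isomorphic to the disjoint union of two edges. $\alpha(G)$ is the maximum size of an independent set of $G$. A dominating set is a vertex set $D$ such that every vertex outside $D$ has a neighbour in $D$; it is minimal if no proper subset is dominating. *)

(* Defs.v *)
From mathcomp Require Import all_boot.
Set Implicit Arguments. Unset Strict Implicit. Unset Printing Implicit Defensive.

Definition simple_graph (T : finType) (e : rel T) : Prop :=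
  symmetric e /\ irreflexive e.

Definition twoK2_free (T : finType) (e : rel T) : Prop :=
  forall x1 y1 x2 y2 : T,
    uniq [:: x1; y1; x2; y2] -> e x1 y1 -> e x2 y2 ->
    e x1 x2 || e x1 y2 || e y1 x2 || e y1 y2.

Definition independent (T : finType) (e : rel T) (S : {set T}) : bool :=
  [forall x in S, forall y in S, ~~ e x y].

Definition alpha (T : finType) (e : rel T) : nat :=
  \max_(S : {set T} | independent e S) #|S|.

Definition dominating (T : finType) (e : rel T) (D : {set T}) : bool :=
  [forall v, (v \in D) || [exists d in D, e v d]].

Definition minimal_dominating (T : finType) (e : rel T) (D : {set T}) : bool :=
  dominating e D && [forall D' : {set T}, (D' \proper D) ==> ~~ dominating e D'].

Definition Nab (T : finType) (e : rel T) (a b : T) : {set T} :=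
  [set v | (v \notin [set a; b]) && (e v a || e v b)].

(* Main.v *)
Require Import Defs.
From mathcomp Require Import all_boot.

Ltac rwall := repeat match goal with H : ?l = ?r |- context [?l] => rewrite H end.

Ltac fin x1 y1 x2 y2 := have := K x1 y1 x2 y2; rewrite /= !inE; rwall; move=> /(_ erefl erefl erefl).

Lemma core (T : eqType) (e : rel T) (sym : symmetric e)
  (K : forall x1 y1 x2 y2 : T, uniq [:: x1; y1; x2; y2] -> e x1 y1 -> e x2 y2 ->
    e x1 x2 || e x1 y2 || e y1 x2 || e y1 y2)
  (a b y y2 pa pb py : T) (Eab : e a b = true)
  (Eya : e y a = true)
  (Eyb : e y b = false)
  (Epaa : e pa a = true)
  (Epab : e pa b = false)
  (Epay : e pa y = false)
  (Epay2 : e pa y2 = false)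
  (Epbb : e pb b = true)
  (Epba : e pb a = false)
  (Epby : e pb y = false)
  (Epby2 : e pb y2 = false)
  (Epyy : e py y = true)
  (Epya : e py a = false)
  (Epyb : e py b = false)
  (Epyy2 : e py y2 = false)
  (Nab : (a == b) = false)
  (Nay : (a == y) = false)
  (Nay2 : (a == y2) = false)
  (Napa : (a == pa) = false)
  (Napb : (a == pb) = false)
  (Napy : (a == py) = false)
  (Nby : (b == y) = false)
  (Nby2 : (b == y2) = false)
  (Nbpa : (b == pa) = false)
  (Nbpb : (b == pb) = false)
  (Nbpy : (b == py) = false)
  (Nyy2 : (y == y2) = false)
  (Nypa : (y == pa) = false)
  (Nypb : (y == pb) = false)
  (Nypy : (y == py) = false)
  (Ny2pa : (y2 == pa) = false)
  (Ny2pb : (y2 == pb) = false)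
  (Ny2py : (y2 == py) = false)
  (Npapb : (pa == pb) = false)
  (Npapy : (pa == py) = false)
  (Npbpy : (pb == py) = false)
  (Hy2 : e y2 a || e y2 b) : False.
Proof.
have sw : forall u v c, e u v = c -> e v u = c by move=> u v c; rewrite sym.
have Eba : e b a = true := sw _ _ _ Eab.
have Eay : e a y = true := sw _ _ _ Eya.
have Eby : e b y = false := sw _ _ _ Eyb.
have Eapa : e a pa = true := sw _ _ _ Epaa.
have Ebpa : e b pa = false := sw _ _ _ Epab.
have Eypa : e y pa = false := sw _ _ _ Epay.
have Ey2pa : e y2 pa = false := sw _ _ _ Epay2.
have Ebpb : e b pb = true := sw _ _ _ Epbb.
have Eapb : e a pb = false := sw _ _ _ Epba.
have Eypb : e y pb = false := sw _ _ _ Epby.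
have Ey2pb : e y2 pb = false := sw _ _ _ Epby2.
have Eypy : e y py = true := sw _ _ _ Epyy.
have Eapy : e a py = false := sw _ _ _ Epya.
have Ebpy : e b py = false := sw _ _ _ Epyb.
have Ey2py : e y2 py = false := sw _ _ _ Epyy2.
have Nba : (b == a) = false by rewrite eq_sym.
have Nya : (y == a) = false by rewrite eq_sym.
have Ny2a : (y2 == a) = false by rewrite eq_sym.
have Npaa : (pa == a) = false by rewrite eq_sym.
have Npba : (pb == a) = false by rewrite eq_sym.
have Npya : (py == a) = false by rewrite eq_sym.
have Nyb : (y == b) = false by rewrite eq_sym.
have Ny2b : (y2 == b) = false by rewrite eq_sym.
have Npab : (pa == b) = false by rewrite eq_sym.
have Npbb : (pb == b) = false by rewrite eq_sym.
have Npyb : (py == b) = false by rewrite eq_sym.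
have Ny2y : (y2 == y) = false by rewrite eq_sym.
have Npay : (pa == y) = false by rewrite eq_sym.
have Npby : (pb == y) = false by rewrite eq_sym.
have Npyy : (py == y) = false by rewrite eq_sym.
have Npay2 : (pa == y2) = false by rewrite eq_sym.
have Npby2 : (pb == y2) = false by rewrite eq_sym.
have Npyy2 : (py == y2) = false by rewrite eq_sym.
have Npbpa : (pb == pa) = false by rewrite eq_sym.
have Npypa : (py == pa) = false by rewrite eq_sym.
have Npypb : (py == pb) = false by rewrite eq_sym.
case Ey2a: (e y2 a); have Eay2 : e a y2 = _ := sw _ _ _ Ey2a.
  case Ey2b: (e y2 b); have Eby2 : e b y2 = _ := sw _ _ _ Ey2b.
    case Eyy2: (e y y2); have Ey2y : e y2 y = _ := sw _ _ _ Eyy2.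
      case Epapb: (e pa pb); have Epbpa : e pb pa = _ := sw _ _ _ Epapb.
        case Epapy: (e pa py); have Epypa : e py pa = _ := sw _ _ _ Epapy.
          case Epbpy: (e pb py); have Epypb : e py pb = _ := sw _ _ _ Epbpy.
            by fin a y2 pb py.
            by fin b y2 pa py.
          case Epbpy: (e pb py); have Epypb : e py pb = _ := sw _ _ _ Epbpy.
            by fin a y2 pb py.
            by fin b pb y py.
        case Epapy: (e pa py); have Epypa : e py pa = _ := sw _ _ _ Epapy.
          case Epbpy: (e pb py); have Epypb : e py pb = _ := sw _ _ _ Epbpy.
            by fin a y2 pb py.
            by fin b y2 pa py.
          case Epbpy: (e pb py); have Epypb : e py pb = _ := sw _ _ _ Epbpy.
            by fin a y2 pb py.
            by fin b pb y py.
      case Epapb: (e pa pb); have Epbpa : e pb pa = _ := sw _ _ _ Epapb.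
        case Epapy: (e pa py); have Epypa : e py pa = _ := sw _ _ _ Epapy.
          case Epbpy: (e pb py); have Epypb : e py pb = _ := sw _ _ _ Epbpy.
            by fin a y2 pb py.
            by fin b y2 y py.
          case Epbpy: (e pb py); have Epypb : e py pb = _ := sw _ _ _ Epbpy.
            by fin a y2 pb py.
            by fin b y2 y py.
        case Epapy: (e pa py); have Epypa : e py pa = _ := sw _ _ _ Epapy.
          case Epbpy: (e pb py); have Epypb : e py pb = _ := sw _ _ _ Epbpy.
            by fin a y2 pb py.
            by fin b y2 y py.
          case Epbpy: (e pb py); have Epypb : e py pb = _ := sw _ _ _ Epbpy.
            by fin a y2 pb py.
            by fin b y2 y py.
    case Eyy2: (e y y2); have Ey2y : e y2 y = _ := sw _ _ _ Eyy2.
      case Epapb: (e pa pb); have Epbpa : e pb pa = _ := sw _ _ _ Epapb.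
        case Epapy: (e pa py); have Epypa : e py pa = _ := sw _ _ _ Epapy.
          case Epbpy: (e pb py); have Epypb : e py pb = _ := sw _ _ _ Epbpy.
            by fin a y2 pb py.
            by fin b pb y y2.
          case Epbpy: (e pb py); have Epypb : e py pb = _ := sw _ _ _ Epbpy.
            by fin a y2 pb py.
            by fin b pb y y2.
        case Epapy: (e pa py); have Epypa : e py pa = _ := sw _ _ _ Epapy.
          case Epbpy: (e pb py); have Epypb : e py pb = _ := sw _ _ _ Epbpy.
            by fin a y2 pb py.
            by fin b pb y y2.
          case Epbpy: (e pb py); have Epypb : e py pb = _ := sw _ _ _ Epbpy.
            by fin a y2 pb py.
            by fin b pb y y2.
      case Epapb: (e pa pb); have Epbpa : e pb pa = _ := sw _ _ _ Epapb.
        case Epapy: (e pa py); have Epypa : e py pa = _ := sw _ _ _ Epapy.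
          case Epbpy: (e pb py); have Epypb : e py pb = _ := sw _ _ _ Epbpy.
            by fin a y2 pb py.
            by fin b pb y py.
          case Epbpy: (e pb py); have Epypb : e py pb = _ := sw _ _ _ Epbpy.
            by fin a y2 pb py.
            by fin b pb y py.
        case Epapy: (e pa py); have Epypa : e py pa = _ := sw _ _ _ Epapy.
          case Epbpy: (e pb py); have Epypb : e py pb = _ := sw _ _ _ Epbpy.
            by fin a y2 pb py.
            by fin b pb y py.
          case Epbpy: (e pb py); have Epypb : e py pb = _ := sw _ _ _ Epbpy.
            by fin a y2 pb py.
            by fin b pb y py.
  case Ey2b: (e y2 b); have Eby2 : e b y2 = _ := sw _ _ _ Ey2b.
    case Eyy2: (e y y2); have Ey2y : e y2 y = _ := sw _ _ _ Eyy2.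
      case Epapb: (e pa pb); have Epbpa : e pb pa = _ := sw _ _ _ Epapb.
        case Epapy: (e pa py); have Epypa : e py pa = _ := sw _ _ _ Epapy.
          case Epbpy: (e pb py); have Epypb : e py pb = _ := sw _ _ _ Epbpy.
            by fin b y2 pa py.
            by fin b y2 pa py.
          case Epbpy: (e pb py); have Epypb : e py pb = _ := sw _ _ _ Epbpy.
            by fin y y2 pa pb.
            by fin b pb y py.
        case Epapy: (e pa py); have Epypa : e py pa = _ := sw _ _ _ Epapy.
          case Epbpy: (e pb py); have Epypb : e py pb = _ := sw _ _ _ Epbpy.
            by fin b y2 pa py.
            by fin b y2 pa py.
          case Epbpy: (e pb py); have Epypb : e py pb = _ := sw _ _ _ Epbpy.
            by fin a pa pb py.
            by fin b pb y py.
      case Epapb: (e pa pb); have Epbpa : e pb pa = _ := sw _ _ _ Epapb.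
        case Epapy: (e pa py); have Epypa : e py pa = _ := sw _ _ _ Epapy.
          case Epbpy: (e pb py); have Epypb : e py pb = _ := sw _ _ _ Epbpy.
            by fin b y2 y py.
            by fin b y2 y py.
          case Epbpy: (e pb py); have Epypb : e py pb = _ := sw _ _ _ Epbpy.
            by fin b y2 y py.
            by fin b y2 y py.
        case Epapy: (e pa py); have Epypa : e py pa = _ := sw _ _ _ Epapy.
          case Epbpy: (e pb py); have Epypb : e py pb = _ := sw _ _ _ Epbpy.
            by fin b y2 y py.
            by fin b y2 y py.
          case Epbpy: (e pb py); have Epypb : e py pb = _ := sw _ _ _ Epbpy.
            by fin a pa pb py.
            by fin b y2 y py.
    case Eyy2: (e y y2); have Ey2y : e y2 y = _ := sw _ _ _ Eyy2.
      case Epapb: (e pa pb); have Epbpa : e pb pa = _ := sw _ _ _ Epapb.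
        case Epapy: (e pa py); have Epypa : e py pa = _ := sw _ _ _ Epapy.
          case Epbpy: (e pb py); have Epypb : e py pb = _ := sw _ _ _ Epbpy.
            by move: Hy2; rewrite /= ?Ey2a ?Ey2b.
            by move: Hy2; rewrite /= ?Ey2a ?Ey2b.
          case Epbpy: (e pb py); have Epypb : e py pb = _ := sw _ _ _ Epbpy.
            by move: Hy2; rewrite /= ?Ey2a ?Ey2b.
            by move: Hy2; rewrite /= ?Ey2a ?Ey2b.
        case Epapy: (e pa py); have Epypa : e py pa = _ := sw _ _ _ Epapy.
          case Epbpy: (e pb py); have Epypb : e py pb = _ := sw _ _ _ Epbpy.
            by move: Hy2; rewrite /= ?Ey2a ?Ey2b.
            by move: Hy2; rewrite /= ?Ey2a ?Ey2b.
          case Epbpy: (e pb py); have Epypb : e py pb = _ := sw _ _ _ Epbpy.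
            by move: Hy2; rewrite /= ?Ey2a ?Ey2b.
            by move: Hy2; rewrite /= ?Ey2a ?Ey2b.
      case Epapb: (e pa pb); have Epbpa : e pb pa = _ := sw _ _ _ Epapb.
        case Epapy: (e pa py); have Epypa : e py pa = _ := sw _ _ _ Epapy.
          case Epbpy: (e pb py); have Epypb : e py pb = _ := sw _ _ _ Epbpy.
            by move: Hy2; rewrite /= ?Ey2a ?Ey2b.
            by move: Hy2; rewrite /= ?Ey2a ?Ey2b.
          case Epbpy: (e pb py); have Epypb : e py pb = _ := sw _ _ _ Epbpy.
            by move: Hy2; rewrite /= ?Ey2a ?Ey2b.
            by move: Hy2; rewrite /= ?Ey2a ?Ey2b.
        case Epapy: (e pa py); have Epypa : e py pa = _ := sw _ _ _ Epapy.
          case Epbpy: (e pb py); have Epypb : e py pb = _ := sw _ _ _ Epbpy.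
            by move: Hy2; rewrite /= ?Ey2a ?Ey2b.
            by move: Hy2; rewrite /= ?Ey2a ?Ey2b.
          case Epbpy: (e pb py); have Epypb : e py pb = _ := sw _ _ _ Epbpy.
            by move: Hy2; rewrite /= ?Ey2a ?Ey2b.
            by move: Hy2; rewrite /= ?Ey2a ?Ey2b.

Qed.

Lemma priv (T : finType) (e : rel T) (X : {set T}) :
  minimal_dominating e X ->
  forall x z, x \in X -> z \in X -> z != x -> e x z ->
  exists v, [/\ v \notin X, e v x & forall w, w \in X -> w != x -> e v w = false].
Proof.
move=> /andP[domX /forallP minX] x z xX zX zx exz.
have := minX (X :\ x); rewrite properD1 //= => /negP nd.
have [v] : exists v, ~~ ((v \in X :\ x) || [exists d in X :\ x, e v d]).
  apply/existsP; apply: contraT => /existsPn H; case: nd; apply/forallP => v.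
  by have := H v; rewrite negbK.
rewrite negb_or => /andP[vD /existsPn nE].
have nE' : forall w, w \in X -> w != x -> e v w = false.
  by move=> w wX wx; apply/negbTE; have := nE w; rewrite !inE wx wX.
case/orP: (forallP domX v) => [vX|].
  have vx : v = x by apply/eqP; move: vD; rewrite !inE vX andbT negbK.
  by subst v; move: (nE' z zX zx); rewrite exz.
case/existsP => d /andP[dX evd].
exists v; split => //.
  apply/negP => vX; move: vD; rewrite !inE vX andbT negbK => /eqP vx.
  by subst v; move: (nE' z zX zx); rewrite exz.
case: (eqVneq d x) => [<- //|dx].
by move: (nE' d dX dx); rewrite evd.
Qed.

Lemma key (T : finType) (e : rel T) (X : {set T}) a b y y2 :
  simple_graph e -> twoK2_free e -> e a b ->
  minimal_dominating e X -> a \in X -> b \in X ->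
  y \in X -> y != a -> y != b -> y2 \in X -> y2 != a -> y2 != b ->
  e y2 a || e y2 b -> y2 != y -> e y a -> e y b = false -> False.
Proof.
move=> [sym irr] K eab md aX bX yX ya yb y2X y2a y2b Hy2 y2y eya eyb.
have sw : forall u v c, e u v = c -> e v u = c by move=> u v c; rewrite sym.
have ab : (a == b) = false by apply/negbTE/eqP => E; move: eab; rewrite E irr.
have ba : b != a by rewrite eq_sym ab.
have [pa [paX epa Fpa]] := @priv T e X md a b aX bX ba eab.
have [pb [pbX epb Fpb]] := @priv T e X md b a bX aX (negbT ab) (sw _ _ _ eab).
have nay' : a != y by rewrite eq_sym.
have [py [pyX epy Fpy]] := @priv T e X md y a yX aX nay' eya.
have mn : forall u v, u \in X -> v \notin X -> (u == v) = false.
  by move=> u v uX vX; apply/negbTE; apply: contraNneq vX => <-.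
have nab : a != b by rewrite ab.
have nby : b != y by rewrite eq_sym.
apply: (@core T e sym K a b y y2 pa pb py eab eya eyb epa (Fpa b bX ba) (Fpa y yX ya) (Fpa y2 y2X y2a)
  epb (Fpb a aX nab) (Fpb y yX yb) (Fpb y2 y2X y2b) epy (Fpy a aX nay') (Fpy b bX nby) (Fpy y2 y2X y2y)).
- exact: ab.
- by rewrite eq_sym (negbTE ya).
- by rewrite eq_sym (negbTE y2a).
- exact: mn.
- exact: mn.
- exact: mn.
- by rewrite eq_sym (negbTE yb).
- by rewrite eq_sym (negbTE y2b).
- exact: mn.
- exact: mn.
- exact: mn.
- by rewrite eq_sym (negbTE y2y).
- exact: mn.
- exact: mn.
- exact: mn.
- exact: mn.
- exact: mn.
- exact: mn.
- by apply/negbTE/eqP => E; move: (Fpb a aX nab); rewrite -E epa.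
- by apply/negbTE/eqP => E; move: (Fpy a aX nay'); rewrite -E epa.
- by apply/negbTE/eqP => E; move: (Fpy b bX nby); rewrite -E epb.
- exact: Hy2.
Qed.

Theorem claim4 (T : finType) (e : rel T) (a b : T) (X : {set T}) :
  simple_graph e -> twoK2_free e -> e a b ->
  minimal_dominating e X -> a \in X -> b \in X -> alpha e < #|X| ->
  1 < #|X :&: Nab e a b| ->
  forall y, y \in X :&: Nab e a b -> e y a /\ e y b.
Proof.
move=> sg K eab md aX bX _ c1 y yY.
have [sym irr] := sg.
have [y2 y2Y y2y] : exists2 y2, y2 \in X :&: Nab e a b & y2 != y.
  have : 0 < #|(X :&: Nab e a b) :\ y| by move: c1; rewrite (cardsD1 y) yY.
  by case/card_gt0P => y2; rewrite in_setD1 => /andP[? ?]; exists y2.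
move: yY y2Y; rewrite !inE => /andP[yX /andP[yab eyab]] /andP[y2X /andP[y2ab ey2ab]].
move: yab y2ab; rewrite !negb_or => /andP[ya yb] /andP[y2a y2b].
have eba : e b a by rewrite sym.
have ey2ba : e y2 b || e y2 a by rewrite orbC.
case Ea: (e y a); case Eb: (e y b) => //; exfalso.
- exact: (@key T e X a b y y2 sg K eab md aX bX yX ya yb y2X y2a y2b ey2ab y2y Ea Eb).
- exact: (@key T e X b a y y2 sg K eba md bX aX yX yb ya y2X y2b y2a ey2ba y2y Eb Ea).
- by move: eyab; rewrite Ea Eb.
Qed.
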